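(* Let $(M,g)$ be a $d$-dimensional Lorentzian manifold with $d>4$, let $p\in M$, and let $\{\ell,n,m^3,\dots,m^d\}$ be a null frame at $p$. Suppose the Weyl tensor $C$ at $p$ is invariant under the subgroup of the Lorentz group at $p$ that fixes $\ell$ and $n$ and acts as $SO(d-2)$, in its standard representation, on $\mathrm{span}\{m^3,\dots,m^d\}$. Then, in this null frame, the Weyl tensor is of type D(bcd): all components of nonzero boost weight vanish, and $\bar S_{ij}=0$, $\bar C_{ijkl}=0$ and $A_{ij}=0$. Consequently the Weyl tensor at $p$ has only one independent component, namely $\bar R$.
   Context: Null frame convention: the metric is $g=2\,\ell\, n+\delta_{ij}m^im^j$, i.e. $g(\ell,n)=1$, $g(m^i,m^j)=\delta_{ij}$, all other products zero. Frame indices: $0$ refers to $\ell$, $1$ to $n$, and $i,j,k,l\in\{3,\dots,d\}$ to the $m^i$; set $n=d-2$ (number of spatial directions). $C_{abcd}$ are the frame components of the Weyl tensor. The boost weight of a component $C_{abcd}$ is (number of indices equal to $0$) minus (number of indices equal to $1$). Define $\bar R_{ij}=\sum_k C_{kikj}$, $\bar R=\sum_i \bar R_{ii}$, $\bar S_{ij}=\bar R_{ij}-\frac1{n}\bar R\,\delta_{ij}$ (trace-free part), $\bar C_{ijkl}$ = the Weyl (totally trace-free) part of the algebraic curvature tensor $C_{ijkl}$ on $\mathbb R^{n}$ with Euclidean metric $\delta_{ij}$, and $A_{ij}=C_{01ij}$. *)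

(* Defs.v *)
(* Frame components of an algebraic (Weyl) tensor at a point
   of a Lorentzian manifold of dimension d = n + 2, in a null frame
   {l, n, m^3, ..., m^d}. *)
From HB Require Import structures.
From mathcomp Require Import all_boot all_order all_algebra.
From mathcomp Require Import reals.
Set Implicit Arguments. Unset Strict Implicit. Unset Printing Implicit Defensive.
Import Order.TTheory GRing.Theory Num.Theory.
Local Open Scope ring_scope.

(* frame indices: 'I_(2+n); index 0 = l, index 1 = n, index 2+i = m^(3+i) *)
Definition fidx (n : nat) := 'I_(2 + n).
Definition fl {n : nat} : fidx n := lshift n (0 : 'I_2).
Definition fn {n : nat} : fidx n := lshift n (1 : 'I_2).
Definition fm {n : nat} (i : 'I_n) : fidx n := rshift 2 i.

Definition tensor4 (R : Type) (n : nat) := fidx n -> fidx n -> fidx n -> fidx n -> R.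

(* the metric in the null frame: g(l,n) = 1, g(m^i,m^j) = delta_ij, others 0.
   It is its own inverse. *)
Definition g2 {R : realType} : 'M[R]_2 := \matrix_(i, j) (if i != j then 1 else 0).
Definition gframe {R : realType} (n : nat) : 'M[R]_(2 + n) := block_mx g2 0 0 1%:M.

(* algebraic Weyl tensor: curvature symmetries, first Bianchi identity and
   total trace-freeness (contraction with the inverse metric g^{bd} = g_{bd}) *)
Definition is_weyl {R : realType} (n : nat) (C : tensor4 R n) : Prop :=
  [/\ (forall a b c d, C a b c d = - C b a c d),
      (forall a b c d, C a b c d = - C a b d c),
      (forall a b c d, C a b c d = C c d a b),
      (forall a b c d, C a b c d + C a c d b + C a d b c = 0)
    & (forall a c, \sum_(b : fidx n) \sum_(d : fidx n) gframe n b d * C a b c d = 0)].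

Definition is_SO {R : realType} (n : nat) (O : 'M[R]_n) : Prop :=
  O *m O^T = 1%:M /\ \det O = 1.

Definition lorentz_of {R : realType} (n : nat) (O : 'M[R]_n) : 'M[R]_(2 + n) :=
  block_mx 1%:M 0 0 O.

Definition transform {R : realType} (n : nat) (L : 'M[R]_(2 + n)) (C : tensor4 R n)
  : tensor4 R n :=
  fun a b c d => \sum_(e : fidx n) \sum_(f : fidx n) \sum_(g : fidx n) \sum_(h : fidx n)
    L a e * L b f * L c g * L d h * C e f g h.

Definition SO_invariant {R : realType} (n : nat) (C : tensor4 R n) : Prop :=
  forall O : 'M[R]_n, is_SO O -> transform (lorentz_of O) C = C.

Definition bw {n : nat} (a : fidx n) : int :=
  (a == fl)%:Z - (a == fn)%:Z.
Definition boost_weight {n : nat} (a b c d : fidx n) : int := bw a + bw b + bw c + bw d.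

Section Components.
Context {R : realType} {n : nat} (C : tensor4 R n).
Definition Cs (i j k l : 'I_n) : R := C (fm i) (fm j) (fm k) (fm l).
Definition Rbar_ij (i j : 'I_n) : R := \sum_(k < n) Cs k i k j.
Definition Rbar : R := \sum_(i < n) Rbar_ij i i.
Definition Sbar (i j : 'I_n) : R := Rbar_ij i j - Rbar / n%:R * (i == j)%:R.
(* Weyl part of the algebraic curvature tensor C_ijkl on R^n (Euclidean) *)
Definition Cbar (i j k l : 'I_n) : R :=
  Cs i j k l
  - ((i == k)%:R * Rbar_ij j l - (i == l)%:R * Rbar_ij j k
     - (j == k)%:R * Rbar_ij i l + (j == l)%:R * Rbar_ij i k) / (n%:R - 2)
  + Rbar * ((i == k)%:R * (j == l)%:R - (i == l)%:R * (j == k)%:R)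
      / ((n%:R - 1) * (n%:R - 2)).
Definition Aij (i j : 'I_n) : R := C fl fn (fm i) (fm j).
End Components.

(* Main.v *)
Require Import Defs.
From HB Require Import structures.
From mathcomp Require Import all_boot all_order all_algebra.
From mathcomp Require Import reals.
From mathcomp Require Import perm ring lra.
From Stdlib Require Import FunctionalExtensionality.
Set Implicit Arguments. Unset Strict Implicit. Unset Printing Implicit Defensive.
Import Order.TTheory GRing.Theory Num.Theory.
Local Open Scope ring_scope.

Section Gen.
Variables (R : realType) (n : nat).
Implicit Types (a b c e x y : fidx n) (i j k l : 'I_n).

Lemma fidx_ind (P : fidx n -> Prop) :
  (forall j : 'I_2, P (lshift n j)) -> (forall i, P (rshift 2 i)) -> forall a, P a.
Proof. move=> h1 h2 a; rewrite -(splitK a); case: (split a) => //=. Qed.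

Variant fidx_spec a : Prop :=
 | FidxL of a = fl | FidxN of a = fn | FidxM i of a = fm i.

Lemma fidxP a : fidx_spec a.
Proof.
elim/fidx_ind: a => [j|i]; last by apply: (FidxM (i:=i)).
case: j => [[|[|//]] H].
- by apply: FidxL; apply/val_inj.
- by apply: FidxN; apply/val_inj.
Qed.

Lemma eqLN : (@fl n == fn) = false. Proof. by []. Qed.
Lemma eqNL : (@fn n == fl) = false. Proof. by []. Qed.
Lemma eqLM i : (fl == fm i) = false. Proof. by []. Qed.
Lemma eqML i : (fm i == fl) = false. Proof. by []. Qed.
Lemma eqNM i : (fn == fm i) = false. Proof. by []. Qed.
Lemma eqMN i : (fm i == fn) = false. Proof. by []. Qed.
Lemma eqMM i j : (fm i == fm j) = (i == j).
Proof. by rewrite /fm (inj_eq (@rshift_inj _ _)). Qed.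

Lemma collapse (G : fidx n -> R) y : (forall x, x != y -> G x = 0) ->
  \sum_x G x = G y.
Proof. by move=> h; rewrite (bigD1 y) //= big1 ?addr0 // => x /h. Qed.

Definition sgx (d : 'I_n -> R) (a : fidx n) : R :=
  match split a with inl _ => 1 | inr i => d i end.
Definition pex (p : 'S_n) (a : fidx n) : fidx n :=
  match split a with inl j => lshift n j | inr i => rshift 2 (p i) end.

Lemma sgxL d (j : 'I_2) : sgx d (lshift n j) = 1.
Proof. by rewrite /sgx -[lshift _ _]/(unsplit (inl _)) unsplitK. Qed.
Lemma sgxR d i : sgx d (rshift 2 i) = d i.
Proof. by rewrite /sgx -[rshift _ _]/(unsplit (inr _)) unsplitK. Qed.
Lemma pexL p (j : 'I_2) : pex p (lshift n j) = lshift n j.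
Proof. by rewrite /pex -[lshift _ _]/(unsplit (inl _)) unsplitK. Qed.
Lemma pexR p i : pex p (rshift 2 i) = rshift 2 (p i).
Proof. by rewrite /pex -[rshift _ _]/(unsplit (inr _)) unsplitK. Qed.

Lemma neqLR (j : 'I_2) i : (lshift n j == rshift 2 i) = false.
Proof.
apply/negbTE/eqP => /(congr1 val) /=; case: j => j hj /= hh.
by move: hj; rewrite hh.
Qed.

Definition Omx (d : 'I_n -> R) (p : 'S_n) : 'M[R]_n := diag_mx (\row_i d i) *m perm_mx p.

Lemma OmxE d p i j : Omx d p i j = d i * (p i == j)%:R.
Proof. by rewrite /Omx mul_diag_mx !mxE. Qed.

Lemma lorentzE d p a x :
  lorentz_of (Omx d p) a x = sgx d a * (x == pex p a)%:R.
Proof.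
elim/fidx_ind: a => [j|i]; elim/fidx_ind: x => [j'|i'].
- by rewrite block_mxEul sgxL pexL mul1r (inj_eq (@lshift_inj _ _)) mxE eq_sym.
- by rewrite block_mxEur sgxL pexL mxE eq_sym neqLR mulr0.
- by rewrite block_mxEdl sgxR pexR mxE neqLR mulr0.
- by rewrite block_mxEdr sgxR pexR OmxE (inj_eq (@rshift_inj _ _)) eq_sym.
Qed.

Lemma Omx_SO (d : 'I_n -> R) (p : 'S_n) : (forall i, d i * d i = 1) -> \prod_i d i * (-1) ^+ odd_perm p = 1 ->
  is_SO (Omx d p).
Proof.
move=> hd hp; split.
  rewrite /Omx trmx_mul tr_perm_mx tr_diag_mx mulmxA -(mulmxA (diag_mx _)).
  rewrite -perm_mxM mulgV perm_mx1 mulmx1 mulmx_diag -diag_const_mx.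
  by congr diag_mx; apply/matrixP => x y; rewrite !mxE hd.
rewrite /Omx det_mulmx det_diag det_perm -[RHS]hp; congr (_ * _).
by apply: eq_bigr => i _; rewrite mxE.
Qed.

Lemma transformE (L : 'M[R]_(2+n)) (s : fidx n -> R) (pi : fidx n -> fidx n)
  (C : tensor4 R n) a b c e :
  (forall a x, L a x = s a * (x == pi a)%:R) ->
  transform L C a b c e = s a * s b * s c * s e * C (pi a) (pi b) (pi c) (pi e).
Proof.
move=> hL; rewrite /transform (@collapse _ (pi a)); last first.
  move=> x hx; rewrite big1 // => f _; rewrite big1 // => g _; rewrite big1 // => h _.
  by rewrite !hL (negbTE hx) !(mulr0, mul0r).
rewrite (@collapse _ (pi b)); last first.
  move=> x hx; rewrite big1 // => g _; rewrite big1 // => h _.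
  by rewrite !hL (negbTE hx) !(mulr0, mul0r).
rewrite (@collapse _ (pi c)); last first.
  move=> x hx; rewrite big1 // => h _.
  by rewrite !hL (negbTE hx) !(mulr0, mul0r).
rewrite (@collapse _ (pi e)); last first.
  by move=> x hx; rewrite !hL (negbTE hx) !(mulr0, mul0r).
by rewrite !hL !eqxx !mulr1.
Qed.

Lemma inv_gen (C : tensor4 R n) (hinv : SO_invariant C) (d : 'I_n -> R) (p : 'S_n) :
  (forall i, d i * d i = 1) -> \prod_i d i * (-1) ^+ odd_perm p = 1 ->
  forall a b c e, C a b c e =
    sgx d a * sgx d b * sgx d c * sgx d e * C (pex p a) (pex p b) (pex p c) (pex p e).
Proof.
move=> hd hp a b c e.
rewrite -{1}(hinv _ (Omx_SO hd hp)); apply: transformE.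
exact: lorentzE.
Qed.

End Gen.

Section Weyl.
Variables (R : realType) (n : nat) (hn : (2 < n)%N) (C : tensor4 R n)
  (hW : is_weyl C) (hinv : SO_invariant C).
Implicit Types (a b c e x y : fidx n) (i j k l : 'I_n) (d : 'I_n -> R) (p : 'S_n).

Lemma as1 a b c e : C a b c e = - C b a c e. Proof. by case: hW. Qed.
Lemma as2 a b c e : C a b c e = - C a b e c. Proof. by case: hW. Qed.
Lemma ps a b c e : C a b c e = C c e a b. Proof. by case: hW. Qed.
Lemma bi a b c e : C a b c e + C a c e b + C a e b c = 0. Proof. by case: hW. Qed.

Lemma Z0a a c e : C a a c e = 0.
Proof. have := as1 a a c e; lra. Qed.
Lemma Z0b a b c : C a b c c = 0.
Proof. have := as2 a b c c; lra. Qed.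

Definition i0 : 'I_n := Ordinal (ltnW (ltnW hn)).
Definition i1 : 'I_n := Ordinal (ltnW hn).
Definition i2 : 'I_n := Ordinal hn.

Lemma fresh2 i j : exists k, (k != i) && (k != j).
Proof.
case: (boolP ((i0 != i) && (i0 != j))) => [h|]; first by exists i0.
case: (boolP ((i1 != i) && (i1 != j))) => [h|]; first by exists i1.
move=> h1 h0; exists i2.
move: h1 h0; rewrite !negb_and !negbK -!val_eqE /=.
by case: i => [[|[|[|?]]] ?]; case: j => [[|[|[|?]]] ?].
Qed.

Lemma sgxfl d : sgx d (@fl n) = 1. Proof. exact: sgxL. Qed.
Lemma sgxfn d : sgx d (@fn n) = 1. Proof. exact: sgxL. Qed.
Lemma sgxfm d i : sgx d (fm i) = d i. Proof. exact: sgxR. Qed.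
Lemma pexfl p : pex p (@fl n) = fl. Proof. exact: pexL. Qed.
Lemma pexfn p : pex p (@fn n) = fn. Proof. exact: pexL. Qed.
Lemma pexfm p i : pex p (fm i) = fm (p i). Proof. exact: pexR. Qed.

Lemma pex1 a : pex 1 a = a.
Proof. by elim/fidx_ind: a => [j|i]; rewrite ?pexL ?pexR ?perm1. Qed.

Definition dflip i k (x : 'I_n) : R := if (x == i) || (x == k) then -1 else 1.

Lemma flipz i k a b c e : i != k ->
  sgx (dflip i k) a * sgx (dflip i k) b * sgx (dflip i k) c * sgx (dflip i k) e = -1 ->
  C a b c e = 0.
Proof.
move=> hik hs.
have := @inv_gen R n C hinv (dflip i k) 1.
rewrite odd_perm1 expr0 mulr1.
move=> H; suff: C a b c e = - C a b c e by lra.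
rewrite {1}(H _ _ a b c e) ?pex1 ?hs ?mulN1r //.
- by move=> x; rewrite /dflip; case: ifP => _; rewrite ?mulrNN mulr1.
rewrite (bigD1 i) //= (bigD1 k) /=; last by rewrite eq_sym.
rewrite big1 /dflip ?eqxx ?orbT /=; first by rewrite mulr1 mulrNN mulr1.
by move=> x /andP [] /negbTE -> /negbTE ->.
Qed.

Definition dp p (x : 'I_n) : R := if odd_perm p && (x == i0) then -1 else 1.

Lemma dp_sq p (z : 'I_n) : dp p z * dp p z = 1.
Proof. by rewrite /dp; case: ifP => _; rewrite ?mulrNN mulr1. Qed.

Lemma dp_prod p : \prod_(z < n) dp p z * (-1) ^+ odd_perm p = 1.
Proof.
case: (boolP (odd_perm p)) => h.
  rewrite (bigD1 i0) // big1 /dp ?h ?eqxx /=; first by rewrite mulr1 expr1 mulrNN mulr1.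
  by move=> z /negbTE ->.
by rewrite big1 ?mul1r ?expr0 // => z _; rewrite /dp (negbTE h).
Qed.

Lemma permg p a b c e : C a b c e =
  sgx (dp p) a * sgx (dp p) b * sgx (dp p) c * sgx (dp p) e *
  C (pex p a) (pex p b) (pex p c) (pex p e).
Proof. exact: (inv_gen hinv (@dp_sq p) (dp_prod p)). Qed.

Lemma zcyc x j k l : j != k -> k != l -> j != l ->
  pex (tperm j k * tperm k l)%g x = x -> C x (fm j) (fm k) (fm l) = 0.
Proof.
move=> hjk hkl hjl hx.
set p := (tperm j k * tperm k l)%g.
have hodd : odd_perm p = false by rewrite odd_permM !odd_tperm hjk hkl.
have pj : p j = l by rewrite permM tpermL tpermL.
have pk : p k = j by rewrite permM tpermR tpermD // eq_sym.
have pl : p l = k by rewrite permM (tpermD hjl hkl) tpermR.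
have E1 := permg p x (fm j) (fm k) (fm l).
have E2 := permg p x (fm l) (fm j) (fm k).
rewrite /dp hodd /= ?sgxfm ?hx !pexfm pj pk pl in E1 E2.
have := bi x (fm j) (fm k) (fm l).
have s1 : sgx (fun=> (1 : R)) x = 1 by rewrite /sgx; case: split.
rewrite s1 !mulr1 !mul1r in E1 E2; lra.
Qed.

Lemma gL (X : fidx n -> R) : \sum_y gframe n fl y * X y = X fn.
Proof.
rewrite (collapse (y:=fn)); last first.
  move=> y; case: (fidxP y) => [->|->|i ->] //= _.
    by rewrite /gframe block_mxEul mxE /= mul0r.
  by rewrite /gframe block_mxEur mxE mul0r.
by rewrite /gframe block_mxEul mxE /= mul1r.
Qed.
Lemma gN (X : fidx n -> R) : \sum_y gframe n fn y * X y = X fl.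
Proof.
rewrite (collapse (y:=fl)); last first.
  move=> y; case: (fidxP y) => [->|->|i ->] //= _.
    by rewrite /gframe block_mxEul mxE /= mul0r.
  by rewrite /gframe block_mxEur mxE mul0r.
by rewrite /gframe block_mxEul mxE /= mul1r.
Qed.
Lemma gM (X : fidx n -> R) i : \sum_y gframe n (rshift 2 i) y * X y = X (fm i).
Proof.
rewrite (collapse (y:=fm i)); last first.
  move=> y; case: (fidxP y) => [->|->|k ->] //= hy.
  - by rewrite /gframe block_mxEdl mxE mul0r.
  - by rewrite /gframe block_mxEdl mxE mul0r.
  - by rewrite /gframe block_mxEdr mxE -eqMM eq_sym (negbTE hy) mul0r.
by rewrite /gframe block_mxEdr mxE eqxx mul1r.
Qed.

Lemma TR a c : C a fl c fn + C a fn c fl + \sum_k C a (fm k) c (fm k) = 0.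
Proof.
case: hW => _ _ _ _ /(_ a c).
rewrite big_split_ord /= big_ord_recl big_ord1.
have -> : lshift n (ord0 : 'I_2) = fl by apply/val_inj.
have -> : lshift n (lift ord0 (ord0 : 'I_1)) = fn by apply/val_inj.
by rewrite gL gN (eq_bigr (fun k => C a (fm k) c (fm k))) // => k _; rewrite gM.
Qed.

Ltac simp_neq := repeat match goal with
 | h : is_true (?x != ?y) |- context [?x == ?y] => rewrite (negbTE h)
 | h : is_true (?x != ?y) |- context [?y == ?x] => rewrite [y == x]eq_sym (negbTE h)
 end.
Ltac sgn := rewrite ?sgxfm ?sgxfl ?sgxfn /dflip ?eqxx ?orbT; simp_neq; rewrite /=; ring.

Definition beta := C (fm i0) (fm i1) (fm i0) (fm i1).

Lemma Cijij i j : i != j -> C (fm i) (fm j) (fm i) (fm j) = beta.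
Proof.
move=> hij.
set j' := tperm i i0 j.
have hj' : j' != i0 by rewrite /j' -{2}(tpermL i i0) (inj_eq (@perm_inj _ _)) eq_sym.
have h01 : i0 != i1 by [].
set p := (tperm i i0 * tperm j' i1)%g.
have pi : p i = i0 by rewrite permM tpermL tpermD // eq_sym.
have pj : p j = i1 by rewrite permM tpermL.
rewrite (permg p) !sgxfm !pexfm pi pj.
have -> : dp p i * dp p j * dp p i * dp p j = (dp p i * dp p i) * (dp p j * dp p j) by ring.
by rewrite !dp_sq !mul1r.
Qed.

Lemma Cs_form i j k l : C (fm i) (fm j) (fm k) (fm l) =
  beta * ((i == k)%:R * (j == l)%:R - (i == l)%:R * (j == k)%:R).
Proof.
case: (eqVneq i j) => [<-|hij]; first by rewrite Z0a; ring.
case: (eqVneq k l) => [<-|hkl]; first by rewrite Z0b; ring.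
case: (eqVneq i k) hij hkl => [<-|hik] hij hkl;
  case: (eqVneq j l) hij hkl => [<-|hjl] hij hkl.
- by rewrite Cijij // ?eqxx; simp_neq; rewrite /=; ring.
- rewrite (flipz (i:=i) (k:=j)); [by rewrite ?eqxx; simp_neq; rewrite /=; ring | by rewrite // eq_sym | sgn].
- rewrite (flipz (i:=j) (k:=i)); [by rewrite ?eqxx; simp_neq; rewrite /=; ring | by rewrite // eq_sym | sgn].
case: (eqVneq i l) hij hkl hik hjl => [<-|hil] hij hkl hik hjl;
  case: (eqVneq j k) hij hkl hik hjl => [<-|hjk] hij hkl hik hjl.
- by rewrite as2 Cijij // ?eqxx; simp_neq; rewrite /=; ring.
- rewrite (flipz (i:=i) (k:=j)); [by rewrite ?eqxx; simp_neq; rewrite /=; ring | by rewrite // eq_sym | sgn].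
- rewrite (flipz (i:=j) (k:=i)); [by rewrite ?eqxx; simp_neq; rewrite /=; ring | by rewrite // eq_sym | sgn].
rewrite zcyc //; first by simp_neq; rewrite /=; ring.
by rewrite pexfm permM !tpermD // eq_sym.
Qed.

Definition al := - (n%:R - 1) * beta / 2.

Lemma sum_delta (i : 'I_n) (x : R) : \sum_(k < n) x * (i == k)%:R = x.
Proof.
rewrite (bigD1 i) //= big1 ?eqxx ?addr0 ?mulr1 // => k hk.
by rewrite eq_sym (negbTE hk) mulr0.
Qed.

Lemma sum_const (x : R) : \sum_(k < n) x = x * n%:R.
Proof. by rewrite sumr_const card_ord mulr_natr. Qed.

Lemma sumCs i : \sum_k C (fm i) (fm k) (fm i) (fm k) = beta * (n%:R - 1).
Proof.
rewrite (eq_bigr (fun k => beta - beta * (i == k)%:R)) => [|k _].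
  by rewrite sumrB sum_const sum_delta; ring.
rewrite Cs_form !eqxx [k == i]eq_sym; case: (i == k) => /=; ring.
Qed.

Lemma CLNii i : C fl (fm i) fn (fm i) = al.
Proof.
have := TR (fm i) (fm i); rewrite sumCs.
rewrite [C (fm i) fl _ _]as1 [C fl (fm i) _ _]as2 [C (fm i) fn _ _]ps.
rewrite [C (fm i) fl _ _]as1 [C fl (fm i) _ _]as2 /al => h.
apply: (@mulIf _ 2); first by rewrite pnatr_eq0.
rewrite mulrAC -mulrA divff ?pnatr_eq0 // mulr1; lra.
Qed.

Lemma CLN i j : C fl (fm i) fn (fm j) = al * (i == j)%:R.
Proof.
case: (eqVneq i j) => [<-|hij]; first by rewrite CLNii mulr1.
have [k /andP[hki hkj]] := fresh2 i j.
rewrite mulr0 (flipz (i:=i) (k:=k)) //; try by rewrite eq_sym.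
sgn.
Qed.

Lemma CLNLN : C fl fn fl fn = n%:R * al.
Proof.
have := TR fl fn; rewrite Z0b.
rewrite (eq_bigr (fun _ => al)) => [|k _]; last by rewrite CLN eqxx mulr1.
rewrite sum_const [C fl fn fn fl]as2; lra.
Qed.

Lemma Cxixj x i j : (x = fl \/ x = fn) -> C x (fm i) x (fm j) = 0.
Proof.
move=> hx.
have s1 d : sgx d x = 1 by case: hx => ->; rewrite ?sgxfl ?sgxfn.
have p1 p : pex p x = x by case: hx => ->; rewrite ?pexfl ?pexfn.
case: (eqVneq i j) => [<-|hij]; last first.
  have [k /andP[hki hkj]] := fresh2 i j.
  rewrite (flipz (i:=i) (k:=k)) //; try by rewrite eq_sym.
  rewrite !s1; sgn.
have E k : C x (fm k) x (fm k) = C x (fm i0) x (fm i0).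
  rewrite (permg (tperm k i0)) !s1 !p1 !sgxfm !pexfm tpermL.
  by rewrite mul1r mulr1 dp_sq mul1r.
have := TR x x; rewrite (eq_bigr (fun _ => C x (fm i0) x (fm i0))) => [|k _]; last exact: E.
rewrite sum_const.
have -> : C x fl x fn + C x fn x fl = 0 by case: hx => ->; rewrite Z0a Z0b addr0.
rewrite add0r E => /eqP; rewrite mulf_eq0 pnatr_eq0 eqn0Ngt (ltnW (ltnW hn)) orbF.
by move/eqP.
Qed.

Lemma CLNxi x i : (x = fl \/ x = fn) -> C fl fn x (fm i) = 0.
Proof.
move=> hx.
have s1 d : sgx d x = 1 by case: hx => ->; rewrite ?sgxfl ?sgxfn.
have [k /andP[hki _]] := fresh2 i i.
rewrite (flipz (i:=i) (k:=k)) //; try by rewrite eq_sym.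
rewrite s1; sgn.
Qed.

Lemma CLNij i j : C fl fn (fm i) (fm j) = 0.
Proof.
case: (eqVneq i j) => [<-|hij]; first by rewrite Z0b.
have [k /andP[hki hkj]] := fresh2 i j.
rewrite (flipz (i:=i) (k:=k)) //; try by rewrite eq_sym.
sgn.
Qed.

Lemma Cxijk x i j k : (x = fl \/ x = fn) -> C x (fm i) (fm j) (fm k) = 0.
Proof.
move=> hx.
have s1 d : sgx d x = 1 by case: hx => ->; rewrite ?sgxfl ?sgxfn.
have p1 p : pex p x = x by case: hx => ->; rewrite ?pexfl ?pexfn.
case: (eqVneq j k) => [<-|hjk]; first by rewrite Z0b.
case: (eqVneq i j) hjk => [<-|hij] hjk.
  rewrite (flipz (i:=k) (k:=i)) //; try by rewrite eq_sym.
  rewrite s1; sgn.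
case: (eqVneq i k) hjk hij => [<-|hik] hjk hij.
  rewrite (flipz (i:=j) (k:=i)) //; try by rewrite eq_sym.
  rewrite s1; sgn.
by apply: zcyc.
Qed.

Definition sp (a : fidx n) : bool := (a != fl) && (a != fn).
Definition qq (a b : fidx n) : R := ((a == b) && sp a)%:R.
Definition hh (a b : fidx n) : R :=
  (((a == fl) && (b == fn)) || ((a == fn) && (b == fl)))%:R.
Definition alp (bt : R) := - (n%:R - 1) * bt / 2.
Definition Model (bt : R) (a b c e : fidx n) : R :=
  bt * (qq a c * qq b e - qq a e * qq b c)
  + alp bt * (hh a c * qq b e + qq a c * hh b e - hh a e * qq b c - qq a e * hh b c)
  - n%:R * alp bt * (hh a c * hh b e - hh a e * hh b c).

Lemma qqC a b : qq a b = qq b a.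
Proof. by rewrite /qq; case: (eqVneq a b) => [->|]. Qed.
Lemma hhC a b : hh a b = hh b a.
Proof. by rewrite /hh orbC (andbC (a == fn)) (andbC (a == fl)). Qed.

Definition P a b c e := C a b c e = Model beta a b c e.

Lemma Psw1 a b c e : P b a c e -> P a b c e.
Proof. by rewrite /P => h; rewrite as1 h /Model; ring. Qed.
Lemma Psw2 a b c e : P a b e c -> P a b c e.
Proof. by rewrite /P => h; rewrite as2 h /Model; ring. Qed.
Lemma Pps a b c e : P c e a b -> P a b c e.
Proof.
rewrite /P => h; rewrite ps h /Model.
rewrite (qqC c a) (qqC e b) (qqC c b) (qqC e a) (hhC c a) (hhC e b) (hhC c b) (hhC e a).
ring.
Qed.
Lemma P0a a c e : P a a c e.
Proof. by rewrite /P Z0a /Model; ring. Qed.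
Lemma P0b a b c : P a b c c.
Proof. by rewrite /P Z0b /Model; ring. Qed.

Ltac msimp := rewrite /Model /qq /hh /sp ?eqxx ?eqLN ?eqNL ?eqLM ?eqML ?eqNM ?eqMN ?eqMM /= ?andbT.

Lemma R1 : P fl fn fl fn.
Proof. by rewrite /P CLNLN; msimp; rewrite /alp -/al; ring. Qed.
Lemma R2 i : P fl fn fl (fm i).
Proof. by rewrite /P CLNxi; [msimp; ring | left]. Qed.
Lemma R3 i : P fl fn fn (fm i).
Proof. by rewrite /P CLNxi; [msimp; ring | right]. Qed.
Lemma R4 i j : P fl fn (fm i) (fm j).
Proof. by rewrite /P CLNij; msimp; ring. Qed.
Lemma R5 i j : P fl (fm i) fl (fm j).
Proof. by rewrite /P Cxixj; [msimp; ring | left]. Qed.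
Lemma R6 i j : P fl (fm i) fn (fm j).
Proof. by rewrite /P CLN; msimp; rewrite ?andbT /alp -/al; ring. Qed.
Lemma R7 i j k : P fl (fm i) (fm j) (fm k).
Proof. by rewrite /P Cxijk; [msimp; ring | left]. Qed.
Lemma R8 i j : P fn (fm i) fn (fm j).
Proof. by rewrite /P Cxixj; [msimp; ring | right]. Qed.
Lemma R9 i j k : P fn (fm i) (fm j) (fm k).
Proof. by rewrite /P Cxijk; [msimp; ring | right]. Qed.
Lemma R10 i j k l : P (fm i) (fm j) (fm k) (fm l).
Proof. by rewrite /P Cs_form; msimp; ring. Qed.

Ltac base := first [ apply: P0a | apply: P0b | apply: R1 | apply: R2 | apply: R3
  | apply: R4 | apply: R5 | apply: R6 | apply: R7 | apply: R8 | apply: R9 | apply: R10 ].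
Ltac base4 := first [ base | apply: Psw1; base | apply: Psw2; base
  | apply: Psw1; apply: Psw2; base ].
Ltac red8 := first [ base4 | apply: Pps; base4 ].

Lemma Pall a b c e : P a b c e.
Proof.
case: (fidxP a) => [->|->|i ->]; case: (fidxP b) => [->|->|j ->];
case: (fidxP c) => [->|->|k ->]; case: (fidxP e) => [->|->|l ->]; red8.
Qed.

Lemma bwL : bw (@fl n) = 1. Proof. by rewrite /bw eqxx eqLN. Qed.
Lemma bwN : bw (@fn n) = -1. Proof. by rewrite /bw eqxx eqNL. Qed.
Lemma bwM i : bw (fm i) = 0. Proof. by rewrite /bw eqML eqMN. Qed.

Lemma qbw a c : qq a c != 0 -> bw a + bw c = 0.
Proof.
rewrite /qq /sp; case: (fidxP a) => [->|->|i ->]; case: (fidxP c) => [->|->|k ->];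
  rewrite ?eqxx ?eqLN ?eqNL ?eqLM ?eqML ?eqNM ?eqMN //= ?bwM ?addr0 //.
Qed.

Lemma hbw a c : hh a c != 0 -> bw a + bw c = 0.
Proof.
rewrite /hh; case: (fidxP a) => [->|->|i ->]; case: (fidxP c) => [->|->|k ->];
  rewrite ?eqxx ?eqLN ?eqNL ?eqLM ?eqML ?eqNM ?eqMN //= ?bwL ?bwN //.
Qed.

Lemma prodz (X Y : fidx n -> fidx n -> R) a b c e :
  (forall a c, X a c != 0 -> bw a + bw c = 0) ->
  (forall a c, Y a c != 0 -> bw a + bw c = 0) ->
  boost_weight a b c e != 0 -> X a c * Y b e = 0 /\ X a e * Y b c = 0.
Proof.
move=> hX hY hw; split.
  case: (eqVneq (X a c) 0) => [->|/hX h1]; first by rewrite mul0r.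
  case: (eqVneq (Y b e) 0) => [->|/hY h2]; first by rewrite mulr0.
  move: hw; rewrite /boost_weight.
  have -> : bw a + bw b + bw c + bw e = (bw a + bw c) + (bw b + bw e) by ring.
  by rewrite h1 h2.
case: (eqVneq (X a e) 0) => [->|/hX h1]; first by rewrite mul0r.
case: (eqVneq (Y b c) 0) => [->|/hY h2]; first by rewrite mulr0.
move: hw; rewrite /boost_weight.
have -> : bw a + bw b + bw c + bw e = (bw a + bw e) + (bw b + bw c) by ring.
by rewrite h1 h2.
Qed.

Lemma part1 a b c e : boost_weight a b c e != 0 -> C a b c e = 0.
Proof.
move=> hw; rewrite (Pall a b c e) /Model.
have [-> ->] := prodz qbw qbw hw.
have [-> ->] := prodz hbw qbw hw.
have [-> ->] := prodz qbw hbw hw.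
have [-> ->] := prodz hbw hbw hw.
ring.
Qed.

Lemma part4 i j : Aij C i j = 0.
Proof. by rewrite /Aij (Pall fl fn (fm i) (fm j)); msimp; ring. Qed.

Lemma n0 : (n%:R : R) != 0.
Proof. by rewrite pnatr_eq0 gtn_eqF // (ltnW (ltnW hn)). Qed.
Lemma n1 : (n%:R - 1 : R) != 0.
Proof. by rewrite subr_eq0 (_ : 1 = 1%:R) // eqr_nat gtn_eqF // (ltnW hn). Qed.
Lemma n2 : (n%:R - 2 : R) != 0.
Proof. by rewrite subr_eq0 eqr_nat gtn_eqF. Qed.

Lemma RbijE i j : Rbar_ij C i j = beta * (n%:R - 1) * (i == j)%:R.
Proof.
rewrite /Rbar_ij /Cs.
rewrite (eq_bigr (fun k => beta * (i == j)%:R - beta * (i == j)%:R * (i == k)%:R)) => [|k _].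
  by rewrite sumrB sum_const sum_delta; ring.
rewrite Cs_form eqxx; case: (eqVneq i k) => [<-|hik]; first by rewrite eq_sym /=; ring.
by rewrite /=; ring.
Qed.

Lemma RbarE : Rbar C = beta * (n%:R - 1) * n%:R.
Proof.
rewrite /Rbar (eq_bigr (fun _ => beta * (n%:R - 1))) => [|i _].
  by rewrite sum_const.
by rewrite RbijE eqxx mulr1.
Qed.

Lemma part2 i j : Sbar C i j = 0.
Proof.
rewrite /Sbar RbijE RbarE.
field; exact: n0.
Qed.

Lemma part3 i j k l : Cbar C i j k l = 0.
Proof.
rewrite /Cbar /Cs Cs_form !RbijE RbarE.
field; rewrite ?n1 ?n2 //.
Qed.

End Weyl.

Theorem mainTheorem1 (R : realType) (n : nat) (hn : (2 < n)%N)
  (C : tensor4 R n) (hW : is_weyl C) (hinv : SO_invariant C) :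
  [/\ (forall a b c d : fidx n, boost_weight a b c d != 0 -> C a b c d = 0),
      (forall i j : 'I_n, Sbar C i j = 0),
      (forall i j k l : 'I_n, Cbar C i j k l = 0),
      (forall i j : 'I_n, Aij C i j = 0)
    & (forall C' : tensor4 R n, is_weyl C' -> SO_invariant C' ->
         Rbar C' = Rbar C -> C' = C)].
Proof.
split.
- exact: (part1 hn hW hinv).
- exact: (part2 hn hW hinv).
- exact: (part3 hn hW hinv).
- exact: (part4 hn hW hinv).
move=> C' hW' hinv' hR.
have hb : beta hn C' = beta hn C.
  move: hR; rewrite (RbarE hn hW' hinv') (RbarE hn hW hinv).
  by move=> /(mulIf (n0 R hn)) /(mulIf (n1 R hn)).
apply: functional_extensionality => a; apply: functional_extensionality => b.
apply: functional_extensionality => c; apply: functional_extensionality => d.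
have := Pall hn hW' hinv' a b c d; have := Pall hn hW hinv a b c d.
by rewrite /P hb => -> ->.
Qed.
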